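(* For binary matrices $P\in\{0,1\}^{k\times\ell}$ and $M\in\{0,1\}^{m\times n}$ the following are equivalent: 1. $P$ is an interval minor of $M$; 2. $M$ has a partition containing $P$; 3. $P$ has an embedding into $M$; 4. $P$ has a partial embedding into $M$.
   Context: Rows are numbered top to bottom, columns left to right; $(i,j)$ is the entry in row $i$, column $j$, a 1-entry if it equals 1. For integers, $[a,b]=\{a,\dots,b\}$, $(a,b]=[a+1,b]$, $[n]=[1,n]$. A row contraction in $M$ replaces two adjacent rows $r,r+1$ by a single row whose entry in column $j$ is $\max\{M(r,j),M(r+1,j)\}$; column contraction is analogous. A matrix $M'$ dominates $M$ if they have the same dimensions and every 1-entry of $M$ is a 1-entry of $M'$. $P$ is an interval minor of $M$ if $M$ can be transformed by a sequence of row and column contractions into a $k\times\ell$ matrix dominating $P$. A partition of $M$ containing $P$ is a choice of integers $0\le r_0<r_1<\dots<r_k\le m$ and $0\le c_0<c_1<\dots<c_\ell\le n$ such that for every 1-entry $(i,j)$ of $P$ the submatrix of $M$ on rows $(r_{i-1},r_i]$ and columns $(c_{j-1},c_j]$ has a 1-entry. An embedding of $P$ into $M$ is a map $\phi:[k]\times[\ell]\to[m]\times[n]$ sending 1-entries of $P$ to 1-entries of $M$ such that for any entries $e_1=(i_1,j_1)$, $e_2=(i_2,j_2)$ with $\phi(e_1)=(i_1^*,j_1^* )$, $\phi(e_2)=(i_2^*,j_2^* )$: $i_1<i_2$ implies $i_1^*<i_2^*$, and $j_1<j_2$ implies $j_1^*<j_2^*$. For a nonempty $S\subseteq[k]\times[\ell]$,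 a partial embedding is a map $\psi:S\to[m]\times[n]$ such that: every 1-entry $e$ of $P$ lies in $S$ and $\psi(e)$ is a 1-entry of $M$; each $e=(i,j)\in S$ is mapped to $(i^*,j^* )$ with $i\le i^*$, $j\le j^*$, $k-i\le m-i^*$, $\ell-j\le n-j^*$; and for $e_1=(i_1,j_1)$, $e_2=(i_2,j_2)$ in $S$ with images $(i_1^*,j_1^* )$, $(i_2^*,j_2^* )$: if $i_1<i_2$ then $i_2-i_1\le i_2^*-i_1^*$, and if $j_1<j_2$ then $j_2-j_1\le j_2^*-j_1^*$. *)

(* Defs.v *)
(* Binary matrices are 'M[bool]_(m, n); rows/columns are
   0-based ordinals (the paper's row i is our row i-1). *)
From mathcomp Require Import all_boot all_order all_algebra.
Set Implicit Arguments. Unset Strict Implicit. Unset Printing Implicit Defensive.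

Definition row_contract (m n : nat) (r : nat) (A : 'M[bool]_(m.+1, n)) : 'M[bool]_(m, n) :=
  \matrix_(i < m, j < n)
    if (i < r)%N then A (inord i) j
    else if i == r :> nat then A (inord i) j || A (inord i.+1) j
    else A (inord i.+1) j.

Definition col_contract (m n : nat) (c : nat) (A : 'M[bool]_(m, n.+1)) : 'M[bool]_(m, n) :=
  \matrix_(i < m, j < n)
    if (j < c)%N then A i (inord j)
    else if j == c :> nat then A i (inord j) || A i (inord j.+1)
    else A i (inord j.+1).

Inductive contracts_to (m n : nat) (A : 'M[bool]_(m, n)) :
  forall m' n', 'M[bool]_(m', n') -> Prop :=
| ct_refl : contracts_to A A
| ct_row : forall m' n' (B : 'M[bool]_(m'.+1, n')) (r : nat),
    (r < m')%N -> contracts_to A B -> contracts_to A (row_contract r B)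
| ct_col : forall m' n' (B : 'M[bool]_(m', n'.+1)) (c : nat),
    (c < n')%N -> contracts_to A B -> contracts_to A (col_contract c B).

Definition dominates (m n : nat) (M' M : 'M[bool]_(m, n)) : Prop :=
  forall i j, M i j -> M' i j.

Definition interval_minor (k l m n : nat) (P : 'M[bool]_(k, l)) (M : 'M[bool]_(m, n)) : Prop :=
  exists C : 'M[bool]_(k, l), contracts_to M C /\ dominates C P.

(* Partition of M containing P: 0 <= r_0 < ... < r_k <= m, 0 <= c_0 < ... < c_l <= n,
   and for every 1-entry (i,j) of P (paper's 1-based (i+1,j+1)) the block on rows
   (r_i, r_{i+1}] and columns (c_j, c_{j+1}] (1-based) contains a 1-entry. *)
Definition has_partition_containing (k l m n : nat) (P : 'M[bool]_(k, l))
    (M : 'M[bool]_(m, n)) : Prop :=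
  exists (r c : nat -> nat),
    (forall i, (i < k)%N -> (r i < r i.+1)%N) /\ (r k <= m)%N /\
    (forall j, (j < l)%N -> (c j < c j.+1)%N) /\ (c l <= n)%N /\
    forall (i : 'I_k) (j : 'I_l), P i j ->
      exists (a : 'I_m) (b : 'I_n),
        [&& (r i < a.+1)%N, (a.+1 <= r i.+1)%N, (c j < b.+1)%N, (b.+1 <= c j.+1)%N & M a b].

Definition is_embedding (k l m n : nat) (P : 'M[bool]_(k, l)) (M : 'M[bool]_(m, n))
    (phi : 'I_k * 'I_l -> 'I_m * 'I_n) : Prop :=
  (forall e : 'I_k * 'I_l, P e.1 e.2 -> M (phi e).1 (phi e).2) /\
  (forall e1 e2 : 'I_k * 'I_l, (e1.1 < e2.1)%N -> ((phi e1).1 < (phi e2).1)%N) /\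
  (forall e1 e2 : 'I_k * 'I_l, (e1.2 < e2.2)%N -> ((phi e1).2 < (phi e2).2)%N).

Definition has_embedding (k l m n : nat) (P : 'M[bool]_(k, l)) (M : 'M[bool]_(m, n)) : Prop :=
  exists phi, is_embedding P M phi.

(* Partial embedding psi : S -> [m] x [n], with S a nonempty subset of [k] x [l];
   psi is represented by a total function whose values outside S are irrelevant.
   All index conditions are shifted to 0-based indices (differences unchanged). *)
Definition is_partial_embedding (k l m n : nat) (P : 'M[bool]_(k, l)) (M : 'M[bool]_(m, n))
    (S : {set 'I_k * 'I_l}) (psi : 'I_k * 'I_l -> 'I_m * 'I_n) : Prop :=
  S != set0 /\
  (forall e : 'I_k * 'I_l, P e.1 e.2 -> e \in S /\ M (psi e).1 (psi e).2) /\
  (forall e : 'I_k * 'I_l, e \in S ->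
     [/\ (e.1 <= (psi e).1)%N, (e.2 <= (psi e).2)%N,
         (k - e.1 <= m - (psi e).1)%N & (l - e.2 <= n - (psi e).2)%N]) /\
  (forall e1 e2 : 'I_k * 'I_l, e1 \in S -> e2 \in S ->
     ((e1.1 < e2.1)%N -> (e2.1 - e1.1 <= (psi e2).1 - (psi e1).1)%N) /\
     ((e1.2 < e2.2)%N -> (e2.2 - e1.2 <= (psi e2).2 - (psi e1).2)%N)).

Definition has_partial_embedding (k l m n : nat) (P : 'M[bool]_(k, l)) (M : 'M[bool]_(m, n)) : Prop :=
  exists S psi, is_partial_embedding P M S psi.

(* Main.v *)
Require Import Defs.
From mathcomp Require Import all_boot all_order all_algebra.
From mathcomp Require Import zify.
Set Implicit Arguments. Unset Strict Implicit. Unset Printing Implicit Defensive.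

Section OneD.
Variables (I : finType) (k m : nat) (x y : I -> nat).

Definition ext (S : pred I) (e : I) : nat :=
  if S e then y e else maxn (x e) (\max_(f | S f && (x f <= x e)) (y f + (x e - x f))).

Lemma ext_spec (S : pred I) :
  (forall e, x e < k) -> (forall e, y e < m) ->
  (forall e, S e -> x e <= y e /\ k - x e <= m - y e) ->
  (forall e1 e2, S e1 -> S e2 -> x e1 < x e2 -> x e2 - x e1 <= y e2 - y e1) ->
  (exists e, S e) ->
  (forall e, ext S e < m) /\ (forall e1 e2, x e1 < x e2 -> ext S e1 < ext S e2).
Proof.
move=> xk ym H1 H2 [e0 Se0].
have km : k <= m by have := H1 _ Se0; have := xk e0; have := ym e0; lia.
have lb : forall e f, ~~ S e -> S f -> x f <= x e -> y f + (x e - x f) <= ext S e.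
  move=> e f nSe Sf le; rewrite /ext (negbTE nSe).
  apply: leq_trans (leq_maxr _ _).
  by apply: (leq_bigmax_cond (P := fun f => S f && (x f <= x e)) (F := fun f => y f + (x e - x f))); rewrite Sf le.
have lbx : forall e, ~~ S e -> x e <= ext S e.
  by move=> e nSe; rewrite /ext (negbTE nSe) leq_maxl.
split.
  move=> e; rewrite /ext; case: ifP => Se; first exact: ym.
  rewrite gtn_max; apply/andP; split; first by have := xk e; lia.
  apply: (big_ind (fun v => v < m)); first by have := xk e; lia.
    by move=> a b ha hb; rewrite gtn_max ha hb.
  move=> f /andP [Sf le]; have := H1 _ Sf; have := xk e; have := xk f; lia.
move=> e1 e2 lt.
case: (boolP (S e1)) => S1; case: (boolP (S e2)) => S2.
- rewrite /ext S1 S2; have := H2 _ _ S1 S2 lt; lia.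
- have := lb _ _ S2 S1 (ltnW lt); rewrite /ext S1; lia.
- rewrite /ext (negbTE S1) S2 gtn_max; apply/andP; split.
    by have := H1 _ S2; lia.
  apply: (big_ind (fun v => v < y e2)); first by have := H1 _ S2; lia.
    by move=> a b ha hb; rewrite gtn_max ha hb.
  move=> f /andP [Sf le]; have := H2 _ _ Sf S2 (leq_ltn_trans le lt); lia.
- rewrite {1}/ext (negbTE S1) gtn_max; apply/andP; split.
    by have := lbx _ S2; lia.
  apply: (big_ind (fun v => v < ext S e2)); first by have := lbx _ S2; lia.
    by move=> a b ha hb; rewrite gtn_max ha hb.
  move=> f /andP [Sf le]; have := lb _ _ S2 Sf (ltnW (leq_ltn_trans le lt)); lia.
Qed.

Lemma emb_pe :
  (forall e, x e < k) -> (forall e, y e < m) ->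
  (forall e1 e2, x e1 < x e2 -> y e1 < y e2) ->
  (forall i, i < k -> exists e, x e = i) ->
  (forall e1 e2, x e1 < x e2 -> y e1 + (x e2 - x e1) <= y e2) /\
  (forall e, x e <= y e) /\ (forall e, k - x e <= m - y e).
Proof.
move=> xk ym mono sec.
have D : forall e1 e2, x e1 < x e2 -> y e1 + (x e2 - x e1) <= y e2.
  move=> e1 e2; move: {2}(x e2) (erefl (x e2)) => n; elim: n e2 => [|n IH] e2 E lt.
    by rewrite E in lt.
  case: (ltnP (x e1) n) => h.
    have nk : n < k by have := xk e2; lia.
    have [e' E'] := sec n nk.
    have h1 : x e1 < x e' by rewrite E'.
    have {h1} h1 := IH e' E' h1.
    have lt2 : x e' < x e2 by rewrite E' E.
    have := mono e' e2 lt2; lia.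
  have := mono _ _ lt; lia.
split => //; split.
  move=> e; case: (posnP (x e)) => [->//|h].
  have k0 : 0 < k by have := xk e; lia.
  have [e' E'] := sec 0 k0.
  have lt2 : x e' < x e by rewrite E'.
  have := D e' e lt2; lia.
move=> e; case: (ltnP (x e) k.-1) => h.
  have k0 : k.-1 < k by have := xk e; lia.
  have [e' E'] := sec k.-1 k0.
  have lt2 : x e < x e' by rewrite E'.
  have := D e e' lt2; have := ym e'; lia.
have := xk e; have := ym e; lia.
Qed.

Lemma emb_part :
  (forall e, x e < k) -> (forall e, y e < m) ->
  (forall e1 e2, x e1 < x e2 -> y e1 < y e2) ->
  (forall i, i < k -> exists e, x e = i) ->
  exists r : nat -> nat, (forall i, i < k -> r i < r i.+1) /\ r k <= m /\
    forall e, r (x e) <= y e < r (x e).+1.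
Proof.
move=> xk ym mono sec.
pose r i := \big[minn/m]_(e | x e == i) y e.
have ub : forall e, r (x e) <= y e.
  move=> e; rewrite /r; have: e \in index_enum I by rewrite mem_index_enum.
  elim: (index_enum I) => // a s IH; rewrite inE big_cons => /orP [/eqP<-|/IH h].
    by rewrite eqxx geq_minl.
  by case: ifP => _ //; rewrite geq_min h orbT.
have lbd : forall i v, v < m -> (forall e, x e = i -> v < y e) -> v < r i.
  move=> i v vm H; apply: (big_ind (fun w => v < w)) => //.
    by move=> a b ha hb; rewrite leq_min ha hb.
  by move=> e /eqP; apply: H.
have up : forall e, y e < r (x e).+1.
  move=> e; apply: lbd => // e' E; apply: mono; lia.
exists r; split.
  move=> i ik; have [e E] := sec i ik; rewrite -E; exact: leq_ltn_trans (ub e) (up e).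
split; last by move=> e; rewrite ub up.
apply: (big_ind (fun w => w <= m)) => //.
  by move=> a b ha hb; rewrite geq_min ha.
by move=> e _; apply: ltnW.
Qed.

End OneD.

Definition blk (r : nat -> nat) (i a : nat) := (r i <= a) && (a < r i.+1).
Definition fullp (r : nat -> nat) (m' m : nat) :=
  r 0 = 0 /\ r m' = m /\ forall i, i < m' -> r i < r i.+1.
Definition contr (r : nat -> nat) (r0 : nat) i := if i <= r0 then r i else r i.+1.
Definition splitp (r : nat -> nat) (i0 : nat) j :=
  if j <= i0 then r j else if j == i0.+1 then (r i0).+1 else r j.-1.
Definition blockmx {m n m' n' : nat} (M : 'M[bool]_(m,n)) (r c : nat -> nat) : 'M[bool]_(m',n') :=
  \matrix_(i < m', j < n') [exists a : 'I_m, exists b : 'I_n, [&& blk r i a, blk c j b & M a b]].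

Lemma full_mono r m' m : fullp r m' m -> forall i j, i <= j <= m' -> r i + (j - i) <= r j.
Proof.
move=> [_ [_ H]] i; elim=> [|j IH] /andP [ij jm]; first by move: ij; rewrite leqn0 => /eqP ->; rewrite addn0.
case: (ltngtP i j.+1) => h; last first.
- by rewrite h subnn addn0.
- lia.
  have h1 : i <= j <= m' by apply/andP; lia.
  have h2 : j < m' by lia.
  have := IH h1; have := H j h2; lia.
Qed.

Lemma full_ge r m' m : fullp r m' m -> forall i, i <= m' -> i <= r i /\ r i + (m' - i) <= m.
Proof.
move=> F i im; have h1 : 0 <= i <= m' by apply/andP; lia.
have h2 : i <= m' <= m' by apply/andP; lia.
have := full_mono F h1; have := full_mono F h2.
case: F => [-> [-> _]]; lia.
Qed.

Lemma contr_full r m' m r0 : fullp r m'.+1 m -> r0 < m' -> fullp (contr r r0) m' m.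
Proof.
move=> [H0 [H1 H2]] lt; rewrite /fullp /contr; split; first by [].
split; first by case: ifP => h; [lia | by []].
move=> i im; case: (leqP i r0) => h1; case: (leqP i.+1 r0) => h2.
- by apply: H2; lia.
- have h3 : i < m'.+1 by lia.
  have h4 : i.+1 < m'.+1 by lia.
  have := H2 _ h3; have := H2 _ h4; lia.
- lia.
- by apply: H2; lia.
Qed.

Lemma contr_blk r m' r0 i a : (forall i, i < m'.+1 -> r i < r i.+1) -> r0 < m' ->
  blk (contr r r0) i a = if i < r0 then blk r i a else if i == r0 then blk r i a || blk r i.+1 a
                         else blk r i.+1 a.
Proof.
move=> H lt; rewrite /blk /contr.
case: (ltngtP i r0) => h.
- by [].
- by [].
- subst i.
  have h1 : r0 < m'.+1 by lia.
  have h2 : r0.+1 < m'.+1 by lia.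
  have := H r0 h1; have := H r0.+1 h2.
  case: (leqP (r r0) a); case: (ltnP a (r r0.+1)); case: (leqP (r r0.+1) a);
  case: (ltnP a (r r0.+2)) => /=; lia.
Qed.

Lemma blk_entry_eq (m n : nat) (M : 'M[bool]_(m,n)) (P P' Q Q' : nat -> bool) :
  (forall a, P a = P' a) -> (forall b, Q b = Q' b) ->
  [exists a : 'I_m, exists b : 'I_n, [&& P a, Q b & M a b]] =
  [exists a : 'I_m, exists b : 'I_n, [&& P' a, Q' b & M a b]].
Proof.
move=> HP HQ; apply: eq_existsb => a; apply: eq_existsb => b; by rewrite HP HQ.
Qed.

Lemma ex_orl (m n : nat) (M : 'M[bool]_(m,n)) (P P' Q : nat -> bool) :
  [exists a : 'I_m, exists b : 'I_n, [&& P a || P' a, Q b & M a b]] =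
  [exists a : 'I_m, exists b : 'I_n, [&& P a, Q b & M a b]] ||
  [exists a : 'I_m, exists b : 'I_n, [&& P' a, Q b & M a b]].
Proof.
apply/existsP/orP.
  move=> [a /existsP [b /and3P [/orP [h|h] h1 h2]]]; [left|right];
  by apply/existsP; exists a; apply/existsP; exists b; rewrite h h1 h2.
move=> [] /existsP [a /existsP [b /and3P [h h1 h2]]]; exists a; apply/existsP; exists b;
  by rewrite h h1 h2 ?orbT.
Qed.

Lemma ex_orr (m n : nat) (M : 'M[bool]_(m,n)) (P Q Q' : nat -> bool) :
  [exists a : 'I_m, exists b : 'I_n, [&& P a, Q b || Q' b & M a b]] =
  [exists a : 'I_m, exists b : 'I_n, [&& P a, Q b & M a b]] ||
  [exists a : 'I_m, exists b : 'I_n, [&& P a, Q' b & M a b]].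
Proof.
apply/existsP/orP.
  move=> [a /existsP [b /and3P [h /orP [h1|h1] h2]]]; [left|right];
  by apply/existsP; exists a; apply/existsP; exists b; rewrite h h1 h2.
move=> [] /existsP [a /existsP [b /and3P [h h1 h2]]]; exists a; apply/existsP; exists b;
  by rewrite h h1 h2 ?orbT.
Qed.

Lemma row_contract_block m n m' n' (M : 'M[bool]_(m,n)) r c r0 :
  fullp r m'.+1 m -> r0 < m' ->
  row_contract r0 (blockmx M r c : 'M_(m'.+1, n')) = blockmx M (contr r r0) c.
Proof.
move=> [_ [_ H]] lt; apply/matrixP => i j; rewrite !mxE.
have i1 : i < m'.+1 by have := ltn_ord i; lia.
have i2 : i.+1 < m'.+1 by have := ltn_ord i; lia.
rewrite !inordK //.
case: ifP => h1; last case: ifP => h2.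
- by apply: eq_existsb => a; apply: eq_existsb => b; rewrite (contr_blk _ _ H lt) h1.
- rewrite -(ex_orl M (blk r i) (blk r i.+1) (blk c j)).
  by apply: eq_existsb => a; apply: eq_existsb => b; rewrite (contr_blk _ _ H lt) h1 h2.
- by apply: eq_existsb => a; apply: eq_existsb => b; rewrite (contr_blk _ _ H lt) h1 h2.
Qed.

Lemma col_contract_block m n m' n' (M : 'M[bool]_(m,n)) r c c0 :
  fullp c n'.+1 n -> c0 < n' ->
  col_contract c0 (blockmx M r c : 'M_(m', n'.+1)) = blockmx M r (contr c c0).
Proof.
move=> [_ [_ H]] lt; apply/matrixP => i j; rewrite !mxE.
have i1 : j < n'.+1 by have := ltn_ord j; lia.
have i2 : j.+1 < n'.+1 by have := ltn_ord j; lia.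
rewrite !inordK //.
case: ifP => h1; last case: ifP => h2.
- by apply: eq_existsb => a; apply: eq_existsb => b; rewrite (contr_blk _ _ H lt) h1.
- rewrite -(ex_orr M (blk r i) (blk c j) (blk c j.+1)).
  by apply: eq_existsb => a; apply: eq_existsb => b; rewrite (contr_blk _ _ H lt) h1 h2.
- by apply: eq_existsb => a; apply: eq_existsb => b; rewrite (contr_blk _ _ H lt) h1 h2.
Qed.

Lemma blockmx_id m n (M : 'M[bool]_(m,n)) r c :
  (forall i, i <= m -> r i = i) -> (forall j, j <= n -> c j = j) ->
  blockmx M r c = M.
Proof.
move=> Hr Hc; apply/matrixP => i j; rewrite mxE /blk.
have ri := Hr i (ltnW (ltn_ord i)); have ri1 := Hr i.+1 (ltn_ord i).
have cj := Hc j (ltnW (ltn_ord j)); have cj1 := Hc j.+1 (ltn_ord j).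
rewrite ri ri1 cj cj1.
apply/existsP/idP.
  move=> [a /existsP [b /and3P [h1 h2 h3]]].
  have -> : i = a by apply: val_inj; move: h1 => /=; lia.
  have -> : j = b by apply: val_inj; move: h2 => /=; lia.
  exact: h3.
move=> h; exists i; apply/existsP; exists j; by rewrite /= !leqnn h; apply/andP; split; apply/andP; split.
Qed.

Lemma blockmx_ext m n m' n' (M : 'M[bool]_(m,n)) r r' c c' :
  (forall i, r i = r' i) -> (forall j, c j = c' j) ->
  (blockmx M r c : 'M_(m',n')) = blockmx M r' c'.
Proof.
move=> Hr Hc; apply/matrixP => i j; rewrite !mxE /blk.
by apply: eq_existsb => a; apply: eq_existsb => b; rewrite !Hr !Hc.
Qed.

Lemma splitp_full r m' m i0 : fullp r m' m -> i0 < m' -> (r i0).+1 < r i0.+1 ->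
  fullp (splitp r i0) m'.+1 m /\ forall j, contr (splitp r i0) i0 j = r j.
Proof.
move=> [H0 [H1 H2]] lt big; split.
  rewrite /fullp /splitp; split; first by [].
  split.
    have -> : (m'.+1 <= i0) = false by lia.
    have -> : (m'.+1 == i0.+1) = false by lia.
    by [].
  move=> j jm.
  case: (ltngtP j i0) => h.
  - apply: H2; lia.
  - have -> : (j.+1 == i0.+1) = false by lia.
    case: (eqVneq j i0.+1) => e.
      by subst j.
    have -> : j = j.-1.+1 by lia.
    rewrite /=; apply: H2; lia.
  - by subst j; rewrite eqxx.
move=> j; rewrite /contr /splitp.
case: (leqP j i0) => h; first by [].
have -> : (j < i0) = false by lia.
by have -> : (j.+1 == i0.+1) = false by lia.
Qed.


Lemma all_ct d : forall m n (M : 'M[bool]_(m,n)) m' n' r c,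
  m' + n' + d = m + n -> fullp r m' m -> fullp c n' n ->
  contracts_to M (blockmx M r c : 'M_(m',n')).
Proof.
elim: d => [|d IH] m n M m' n' r c E Fr Fc.
  have [h1 h1'] := full_ge Fr (leqnn m'); have [h2 h2'] := full_ge Fc (leqnn n').
  have em : m' = m by lia.
  have en : n' = n by lia.
  subst m' n'.
  rewrite blockmx_id; first exact: ct_refl.
    by move=> i im; have [a b] := full_ge Fr im; lia.
  by move=> i im; have [a b] := full_ge Fc im; lia.
have [h1 h1'] := full_ge Fr (leqnn m'); have [h2 h2'] := full_ge Fc (leqnn n').
case: (ltnP m' m) => hm.
  case: (boolP [exists i : 'I_m', (r i).+1 < r i.+1]) => [/existsP [i0 Hi]|/existsP Hn].
    have [Fs Ec] := splitp_full Fr (ltn_ord i0) Hi.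
    have E' : m'.+1 + n' + d = m + n by lia.
    have := ct_row (ltn_ord i0) (IH _ _ M _ _ _ _ E' Fs Fc).
    rewrite row_contract_block //.
    by rewrite (@blockmx_ext _ _ _ _ M _ _ _ _ Ec (fun j => erefl (c j))).
  exfalso; have : forall i, i <= m' -> r i = i.
    elim=> [|i IHi] im; first by case: Fr.
    have := IHi (ltnW im); case: Fr => [_ [_ H]]; have := H i im => h3 h4.
    case: (ltnP (r i).+1 (r i.+1)) => h5; last by lia.
    by case: Hn; exists (Ordinal im).
  move=> /(_ m' (leqnn _)); case: Fr => [_ [-> _]]; lia.
have em : m' = m by lia.
case: (ltnP n' n) => hn; last by lia.
case: (boolP [exists i : 'I_n', (c i).+1 < c i.+1]) => [/existsP [i0 Hi]|/existsP Hn].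
  have [Fs Ec] := splitp_full Fc (ltn_ord i0) Hi.
  have E' : m' + n'.+1 + d = m + n by lia.
  have := ct_col (ltn_ord i0) (IH _ _ M _ _ _ _ E' Fr Fs).
  rewrite col_contract_block //.
  by rewrite (@blockmx_ext _ _ _ _ M _ _ _ _ (fun j => erefl (r j)) Ec).
exfalso; have : forall i, i <= n' -> c i = i.
  elim=> [|i IHi] im; first by case: Fc.
  have := IHi (ltnW im); case: Fc => [_ [_ H]]; have := H i im => h3 h4.
  case: (ltnP (c i).+1 (c i.+1)) => h5; last by lia.
  by case: Hn; exists (Ordinal im).
move=> /(_ n' (leqnn _)); case: Fc => [_ [-> _]]; lia.
Qed.

Lemma ct_block m n (M : 'M[bool]_(m,n)) m' n' (B : 'M[bool]_(m',n')) :
  contracts_to M B -> exists r c, [/\ fullp r m' m, fullp c n' n & B = blockmx M r c].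
Proof.
elim=> [|m1 n1 B1 r0 lt _ [r [c [Fr Fc ->]]]|m1 n1 B1 c0 lt _ [r [c [Fr Fc ->]]]].
- exists id, id; split; try by split.
  by rewrite blockmx_id.
- exists (contr r r0), c; split => //; last by rewrite row_contract_block.
  exact: contr_full.
- exists r, (contr c c0); split => //; last by rewrite col_contract_block.
  exact: contr_full.
Qed.

Lemma part_mono (r : nat -> nat) k : (forall i, i < k -> r i < r i.+1) ->
  forall i j, i < j <= k -> r i.+1 <= r j.
Proof.
move=> H i; elim=> [|j IH] /andP [ij jk]; first by [].
case: (ltngtP i j) => h.
- have h1 : i < j <= k by apply/andP; lia.
  have := IH h1; have := H j (ltac:(lia)); lia.
- lia.
- by subst j.
Qed.

Lemma im_part k l m n (P : 'M[bool]_(k, l)) (M : 'M[bool]_(m, n)) :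
  interval_minor P M -> has_partition_containing P M.
Proof.
move=> [C [ct dom]]; have [r [c [Fr Fc EC]]] := ct_block ct.
exists r, c; case: Fr => [_ [rk Hr]]; case: Fc => [_ [cl Hc]].
split => //; split; first by rewrite rk.
split => //; split; first by rewrite cl.
move=> i j /dom; rewrite EC mxE => /existsP [a /existsP [b /and3P [ha hb hM]]].
exists a, b; move: ha hb; rewrite /blk !ltnS => /andP [-> ->] /andP [-> ->]; exact: hM.
Qed.

Definition fixp (r : nat -> nat) k m i := if i == 0 then 0 else if i == k then m else r i.

Lemma fix_full (r : nat -> nat) k m : 0 < k -> (forall i, i < k -> r i < r i.+1) -> r k <= m ->
  fullp (fixp r k m) k m /\
  forall i, i < k -> fixp r k m i <= r i /\ r i.+1 <= fixp r k m i.+1.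
Proof.
move=> k0 H rk; have Mr := part_mono H; rewrite /fixp.
split; last first.
  move=> i ik; split.
    case: ifP => /eqP h1; first lia.
    case: ifP => /eqP h2; lia.
  rewrite /=; case: eqP => h2; last lia.
  by rewrite h2.
rewrite /fullp; split => //; split.
  case: ifP => /eqP h1; [lia|]; by rewrite eqxx.
move=> i ik; have := H i ik.
have h0 : r i.+1 <= r k.
  case: (ltngtP i.+1 k) => h; [ | lia | by rewrite h].
  have : i.+1 < k <= k by apply/andP; lia.
  move=> /Mr; have := H i.+1 h; lia.
move=> hi /=; have -> : (i == k) = false by lia.
case: eqP => e1; case: eqP => e2; lia.
Qed.

Lemma part_im k l m n (P : 'M[bool]_(k, l)) (M : 'M[bool]_(m, n)) :
  (0 < k) -> (0 < l) -> has_partition_containing P M -> interval_minor P M.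
Proof.
move=> k0 l0 [r [c [Hr [rk [Hc [cl H]]]]]].
have [Fr Br] := fix_full k0 Hr rk.
have [Fc Bc] := fix_full l0 Hc cl.
set r' := fixp r k m in Fr Br *.
set c' := fixp c l n in Fc Bc *.
have [km _] := full_ge Fr (leqnn k).
have [ln _] := full_ge Fc (leqnn l).
case: Fr => [a1 [a2 a3]]; case: Fc => [b1 [b2 b3]].
have ekm : k + l + (m + n - k - l) = m + n.
  move: km ln; rewrite a2 b2; lia.
exists (blockmx M r' c'); split.
  apply: (all_ct M ekm); by split.
move=> i j /H [a [b /and5P [h1 h2 h3 h4 h5]]].
rewrite mxE; apply/existsP; exists a; apply/existsP; exists b.
rewrite h5 /blk andbT.
have [u1 u2] := Br i (ltn_ord i); have [v1 v2] := Bc j (ltn_ord j).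
apply/andP; split; apply/andP; split; lia.
Qed.

Lemma part_emb k l m n (P : 'M[bool]_(k, l)) (M : 'M[bool]_(m, n)) :
  has_partition_containing P M -> has_embedding P M.
Proof.
move=> [r [c [Hr [rk [Hc [cl H]]]]]].
have Mr := part_mono Hr; have Mc := part_mono Hc.
pose Q (e : 'I_k * 'I_l) (ab : 'I_m * 'I_n) :=
  [&& r e.1 < ab.1.+1, ab.1.+1 <= r e.1.+1, c e.2 < ab.2.+1, ab.2.+1 <= c e.2.+1 & M ab.1 ab.2].
have rb : forall i, i < k -> r i < m.
  move=> i ik; have := Hr i ik; have : i < k <= k by apply/andP; lia.
  move/Mr; lia.
have cb : forall i, i < l -> c i < n.
  move=> i ik; have := Hc i ik; have : i < l <= l by apply/andP; lia.
  move/Mc; lia.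
pose phi (e : 'I_k * 'I_l) : 'I_m * 'I_n :=
  if [pick ab | Q e ab] is Some ab then ab
  else (Ordinal (rb _ (ltn_ord e.1)), Ordinal (cb _ (ltn_ord e.2))).
have B : forall e : 'I_k * 'I_l, [/\ r e.1 <= (phi e).1 < r e.1.+1 & c e.2 <= (phi e).2 < c e.2.+1].
  move=> e; rewrite /phi; case: pickP => [ab /and5P [h1 h2 h3 h4 _]|_].
    by split; apply/andP; split; lia.
  rewrite /=; have := Hr _ (ltn_ord e.1); have := Hc _ (ltn_ord e.2).
  by move=> u v; split; apply/andP; split; lia.
exists phi; split; last split.
- move=> [i j] /= /H [a [b Hab]]; rewrite /phi; case: pickP => [ab /and5P [_ _ _ _ //]|no].
  by have := no (a, b); rewrite /Q /= Hab.
- move=> e1 e2 lt; have [/andP [_ u1] _] := B e1; have [/andP [u2 _] _] := B e2.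
  have : e1.1 < e2.1 <= k by apply/andP; split => //; exact: ltnW (ltn_ord _).
  move/Mr; lia.
- move=> e1 e2 lt; have [_ /andP [_ u1]] := B e1; have [_ /andP [u2 _]] := B e2.
  have : e1.2 < e2.2 <= l by apply/andP; split => //; exact: ltnW (ltn_ord _).
  move/Mc; lia.
Qed.

Lemma emb_partc k l m n (P : 'M[bool]_(k, l)) (M : 'M[bool]_(m, n)) :
  (0 < k) -> (0 < l) -> has_embedding P M -> has_partition_containing P M.
Proof.
move=> k0 l0 [phi [H1 [H2 H3]]].
have [r [Hr [rk Rr]]] := emb_part (k := k) (m := m) (x := fun e : 'I_k * 'I_l => val e.1)
   (y := fun e => val (phi e).1) (fun e => ltn_ord _) (fun e => ltn_ord _) H2
   (fun i ik => ex_intro _ (Ordinal ik, Ordinal l0) erefl).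
have [c [Hc [cl Rc]]] := emb_part (k := l) (m := n) (x := fun e : 'I_k * 'I_l => val e.2)
   (y := fun e => val (phi e).2) (fun e => ltn_ord _) (fun e => ltn_ord _) H3
   (fun i ik => ex_intro _ (Ordinal k0, Ordinal ik) erefl).
exists r, c; split => //; split => //; split => //; split => //.
move=> i j Pij; exists (phi (i, j)).1, (phi (i, j)).2.
have := Rr (i, j); have := Rc (i, j); rewrite /= => /andP [u1 u2] /andP [v1 v2].
by rewrite !ltnS u1 u2 v1 v2 (H1 (i, j) Pij).
Qed.

Lemma emb_pemb k l m n (P : 'M[bool]_(k, l)) (M : 'M[bool]_(m, n)) :
  (0 < k) -> (0 < l) -> has_embedding P M -> has_partial_embedding P M.
Proof.
move=> k0 l0 [phi [H1 [H2 H3]]].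
have [Dr [Gr Lr]] := emb_pe (k := k) (m := m) (x := fun e : 'I_k * 'I_l => val e.1)
   (y := fun e => val (phi e).1) (fun e => ltn_ord _) (fun e => ltn_ord _) H2
   (fun i ik => ex_intro _ (Ordinal ik, Ordinal l0) erefl).
have [Dc [Gc Lc]] := emb_pe (k := l) (m := n) (x := fun e : 'I_k * 'I_l => val e.2)
   (y := fun e => val (phi e).2) (fun e => ltn_ord _) (fun e => ltn_ord _) H3
   (fun i ik => ex_intro _ (Ordinal k0, Ordinal ik) erefl).
exists setT, phi; split; last split; last split.
- by apply/set0Pn; exists (Ordinal k0, Ordinal l0); rewrite inE.
- by move=> e Pe; rewrite inE; split => //; apply: H1.
- by move=> e _; split; [apply: Gr | apply: Gc | apply: Lr | apply: Lc].
- move=> e1 e2 _ _; split => lt.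
    by have := Dr _ _ lt; rewrite /=; lia.
  by have := Dc _ _ lt; rewrite /=; lia.
Qed.

Lemma pemb_emb k l m n (P : 'M[bool]_(k, l)) (M : 'M[bool]_(m, n)) :
  has_partial_embedding P M -> has_embedding P M.
Proof.
move=> [S [psi [S0 [H1 [H2 H3]]]]].
have [e0 e0S] : exists e, e \in S by move/set0Pn: S0 => [e he]; exists e.
have [Br Mr] := ext_spec (k := k) (m := m) (x := fun e : 'I_k * 'I_l => val e.1)
   (y := fun e => val (psi e).1) (S := mem S) (fun e => ltn_ord _) (fun e => ltn_ord _)
   (fun e he => let: And4 a b c d := H2 e he in conj a c)
   (fun e1 e2 h1 h2 lt => (H3 e1 e2 h1 h2).1 lt) (ex_intro _ e0 e0S).
have [Bc Mc] := ext_spec (k := l) (m := n) (x := fun e : 'I_k * 'I_l => val e.2)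
   (y := fun e => val (psi e).2) (S := mem S) (fun e => ltn_ord _) (fun e => ltn_ord _)
   (fun e he => let: And4 a b c d := H2 e he in conj b d)
   (fun e1 e2 h1 h2 lt => (H3 e1 e2 h1 h2).2 lt) (ex_intro _ e0 e0S).
exists (fun e => (Ordinal (Br e), Ordinal (Bc e))); split; last split.
- move=> e Pe; have [eS Me] := H1 e Pe.
  have E1 : Ordinal (Br e) = (psi e).1 by apply: val_inj; rewrite /= /ext /= eS.
  have E2 : Ordinal (Bc e) = (psi e).2 by apply: val_inj; rewrite /= /ext /= eS.
  by rewrite /= E1 E2.
- by move=> e1 e2 lt; apply: Mr.
- by move=> e1 e2 lt; apply: Mc.
Qed.

Unset Implicit Arguments.
Theorem lemma2p1 (k l m n : nat) (P : 'M[bool]_(k, l)) (M : 'M[bool]_(m, n)) :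
  (0 < k)%N -> (0 < l)%N ->
  [/\ (interval_minor P M <-> has_partition_containing P M),
      (has_partition_containing P M <-> has_embedding P M) &
      (has_embedding P M <-> has_partial_embedding P M)].
Proof.
move=> k0 l0; split; split.
- exact: im_part.
- exact: part_im.
- exact: part_emb.
- exact: emb_partc.
- exact: emb_pemb.
- exact: pemb_emb.
Qed.
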